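(* Fix $j\ge1$, $\alpha>0$, $\ell>0$, $p\in\mathbb{N}$. In the modified GPORT with immigration $\mathcal{T}_{\alpha,\ell}$, let $B_{N,m}$ be the number of children of the root $0$ whose subtree has exactly $m$ nodes, after $N$ insertions. Let $(Z_{N,0},\dots,Z_{N,j+1})_{N\ge0}$ be the urn described in the context. Then the processes $\big(B_{N,1},\dots,B_{N,j}\big)_{N\ge0}$ and $\Big(\frac{Z_{N,1}}{(\alpha+1)-1},\frac{Z_{N,2}}{2(\alpha+1)-1},\dots,\frac{Z_{N,j}}{j(\alpha+1)-1}\Big)_{N\ge0}$ have the same law.
   Context: Modified GPORT with immigration $\mathcal{T}_{\alpha,\ell}$ (period $p$): at time $0$ a single root labelled $0$; at time $N$ there are ordinary nodes $1,\dots,N$, root $0$ and $\lfloor N/p\rfloor$ immigrant roots; node $N+1$ attaches to an ordinary node $v$ w.p. $(d(v)+\alpha)/C_N$ and to a root $v$ (root $0$ or immigrant) w.p. $(d(v)+\ell)/C_N$, $d(v)$ the out-degree, $C_N=(1+\alpha)N+(\lfloor N/p\rfloor+1)\ell$; after attaching node $N+1$, if $p\mid(N+1)$ a new isolated immigrant root is added. Urn with colours $0,1,\dots,j+1$ (real amounts): $Z_{0,\cdot}=(\ell,0,\dots,0)$. At draw number $N+1$ ($N\ge0$), colour $i$ is drawn w.p. $Z_{N,i}/\sum_{i'}Z_{N,i'}$. Drawing colour $0$: add $1$ to colour $0$ and $\alpha$ to colour $1$. Drawing colour $m$, $1\le m\le j$: remove $m(\alpha+1)-1$ from colour $m$ and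 add $(m+1)(\alpha+1)-1$ to colour $m+1$. Drawing colour $j+1$: add $1+\alpha$ to colour $j+1$. In addition, if $p\mid(N+1)$, add $\ell$ to colour $j+1$ (regardless of the drawn colour). *)

(* Defs.v *)
From mathcomp Require Import all_boot all_order all_algebra.
From mathcomp Require Import reals.
Set Implicit Arguments. Unset Strict Implicit. Unset Printing Implicit Defensive.
Import Order.TTheory GRing.Theory Num.Theory.
Local Open Scope ring_scope.

(* A vertex is either a root  [inl k]  (k = 0 : the root 0,               *)
(* k >= 1 : the k-th immigrant root, added after insertion k*p)           *)
(* or an ordinary node  [inr n]  (n >= 1).                                 *)
(* A history h : seq vertex records, at position n (0-based), the vertex  *)
(* to which ordinary node n+1 was attached.  size h = number of insertions*)
Definition vertex := (nat + nat)%type.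
Definition root0 : vertex := inl 0%N.

(* vertices available when attaching node N+1 (tree after N insertions) *)
Definition gport_choices (p N : nat) : seq vertex :=
  root0 :: [seq (inl k : vertex) | k <- iota 1 (N %/ p)]
        ++ [seq (inr n : vertex) | n <- iota 1 N].

Fixpoint gport_hists (p N : nat) : seq (seq vertex) :=
  match N with
  | 0 => [:: [::]]
  | N'.+1 => flatten [seq [seq rcons h v | v <- gport_choices p N']
                     | h <- gport_hists p N']
  end.

Definition outdeg (h : seq vertex) (v : vertex) : nat := count (pred1 v) h.

Section Gport.
Variables (R : realType) (alpha ell : R) (p : nat).

Definition gport_C (N : nat) : R :=
  (1 + alpha) * N%:R + ((N %/ p)%:R + 1) * ell.

Definition gport_trans (h : seq vertex) (v : vertex) : R :=
  match v with
  | inl _ => ((outdeg h v)%:R + ell) / gport_C (size h)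
  | inr _ => ((outdeg h v)%:R + alpha) / gport_C (size h)
  end.

Definition gport_weight (h : seq vertex) : R :=
  \prod_(n < size h) gport_trans (take n h) (nth root0 h n).
End Gport.

Fixpoint in_subtree (h : seq vertex) (f n u : nat) : bool :=
  match f with
  | 0 => false
  | f'.+1 => (n == u) ||
      match nth root0 h n.-1 with
      | inr k => in_subtree h f' k u
      | inl _ => false
      end
  end.

Definition subtree_size (h : seq vertex) (u : nat) : nat :=
  count (fun n => in_subtree h n n u) (iota 1 (size h)).

Definition gport_B (h : seq vertex) (m : nat) : nat :=
  count (fun u => (nth root0 h u.-1 == root0) && (subtree_size h u == m))
        (iota 1 (size h)).

Definition gport_traj (R : realType) (j : nat) (h : seq vertex) : seq (seq R) :=
  [seq [seq (gport_B (take n h) m)%:R | m <- iota 1 j] | n <- iota 0 (size h).+1].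

(* The urn with colours 0..j+1.  A history is the sequence of drawn colours. *)
Fixpoint urn_hists (j N : nat) : seq (seq nat) :=
  match N with
  | 0 => [:: [::]]
  | N'.+1 => flatten [seq [seq rcons h c | c <- iota 0 j.+2] | h <- urn_hists j N']
  end.

Section Urn.
Variables (R : realType) (alpha ell : R) (p j : nat).

Definition urn_init : nat -> R := fun i => if i == 0%N then ell else 0.

(* composition after draw number N+1, where colour c was drawn *)
Definition urn_step (N c : nat) (Z : nat -> R) : nat -> R := fun i =>
  Z i
  + (if c == 0%N then (if i == 0%N then 1 else if i == 1%N then alpha else 0)
     else if (c <= j)%N then
       (if i == c then - (c%:R * (alpha + 1) - 1)
        else if i == c.+1 then c.+1%:R * (alpha + 1) - 1 else 0)
     else (if i == j.+1 then 1 + alpha else 0))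
  + (if ((p %| N.+1)%N && (i == j.+1)) then ell else 0).

Fixpoint urn_state (h : seq nat) (n : nat) : nat -> R :=
  match n with
  | 0 => urn_init
  | n'.+1 => urn_step n' (nth 0%N h n') (urn_state h n')
  end.

Definition urn_weight (h : seq nat) : R :=
  \prod_(n < size h)
     (urn_state h n (nth 0%N h n) / \sum_(i < j.+2) urn_state h n i).

Definition urn_traj (h : seq nat) : seq (seq R) :=
  [seq [seq urn_state h n m / (m%:R * (alpha + 1) - 1) | m <- iota 1 j]
  | n <- iota 0 (size h).+1].
End Urn.

(* Main.v *)
Require Import Defs.
From mathcomp Require Import all_boot all_order all_algebra.
From mathcomp Require Import reals.
Import Order.TTheory GRing.Theory Num.Theory.
Notation r0 := Defs.root0.
From mathcomp Require Import zify ring lra.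
Set Implicit Arguments. Unset Strict Implicit. Unset Printing Implicit Defensive.

Definition par (h : seq vertex) (n : nat) : vertex := nth r0 h n.-1.

Fixpoint topf (h : seq vertex) (f n : nat) : option nat :=
  match f with 0 => None | f'.+1 =>
   match par h n with
   | inl 0 => Some n
   | inl _ => None
   | inr k => if (0 < k < n)%N then topf h f' k else None
   end end.
Definition top h n := topf h n n.

Lemma topf_fuel h f f' n : (0 < n)%N -> (n <= f)%N -> (n <= f')%N -> topf h f n = topf h f' n.
Proof.
elim: f f' n => [|f IH] f' n n0 nf nf'; first lia.
case: f' nf' => [|f'] nf'; first lia.
rewrite /=; case: (par h n) => [[|k]|k] //.
case: ifP => // /andP[k0 kn]; apply: IH => //; by rewrite -ltnS (leq_trans kn).
Qed.

Lemma topE h n : (0 < n)%N -> top h n =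
  match par h n with inl 0 => Some n | inl _ => None
  | inr k => if (0 < k < n)%N then top h k else None end.
Proof.
case: n => // n _; rewrite /top /=.
case: (par h n.+1) => [[|k]|k] //.
case: ifP => // /andP[k0 kn]; apply: topf_fuel => //.
Qed.

Lemma par_rcons h v n : (0 < n)%N -> (n <= size h)%N -> par (rcons h v) n = par h n.
Proof. by case: n => // n _ hn; rewrite /par /= nth_rcons hn. Qed.

Lemma par_new h v : par (rcons h v) (size h).+1 = v.
Proof. by rewrite /par /= nth_rcons ltnn eqxx. Qed.

Lemma topf_rcons h v f n : (0 < n)%N -> (n <= size h)%N -> topf (rcons h v) f n = topf h f n.
Proof.
elim: f n => [|f IH] n n0 nh //=.
rewrite par_rcons //; case: (par h n) => [[|k]|k] //.
case: ifP => // /andP[k0 kn]; apply: IH => //; lia.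
Qed.

Lemma top_rcons h v n : (0 < n)%N -> (n <= size h)%N -> top (rcons h v) n = top h n.
Proof. exact: topf_rcons. Qed.

Lemma topf_some h f n u : (0 < n)%N -> topf h f n = Some u -> (0 < u <= n)%N && (par h u == r0).
Proof.
elim: f n => [|f IH] n n0 //=.
case e: (par h n) => [[|k]|k] //.
  by case=> <-; rewrite n0 leqnn e.
case: ifP => // /andP[k0 kn] /(IH _ k0) /andP[/andP[u0 uk] ->].
rewrite u0 /=; lia.
Qed.

Lemma top_some h n u : (0 < n)%N -> top h n = Some u -> (0 < u <= n)%N && (par h u == r0).
Proof. exact: topf_some. Qed.

Lemma top_self h u : (0 < u)%N -> par h u = r0 -> top h u = Some u.
Proof. by move=> u0 e; rewrite topE // e. Qed.

Lemma mem_choices p N v : (v \in gport_choices p N) =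
  match v with inl k => (k <= N %/ p)%N | inr n => (0 < n <= N)%N end.
Proof.
rewrite /gport_choices inE mem_cat; case: v => k.
  rewrite (mem_map inl_inj) mem_iota.
  have -> : (inl k \in [seq (inr n : vertex) | n <- iota 1 N]) = false.
    by apply/negbTE/negP => /mapP[].
  rewrite orbF /r0 /=; case: k => [|k] //=; lia.
rewrite (mem_map (@inr_inj nat nat)) mem_iota.
have -> : (inr k \in [seq (inl n : vertex) | n <- iota 1 (N %/ p)]) = false.
  by apply/negbTE/negP => /mapP[].
rewrite /=; lia.
Qed.

Definition valid p h := all (fun i => nth r0 h i \in gport_choices p i) (iota 0 (size h)).

Lemma valid_rcons p h v : valid p (rcons h v) = valid p h && (v \in gport_choices p (size h)).
Proof.
rewrite /valid size_rcons -addn1 iotaD all_cat /= andbT nth_rcons ltnn eqxx.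
congr (_ && _); apply: eq_in_all => i; rewrite mem_iota /= => hi.
by rewrite nth_rcons hi.
Qed.

Lemma valid_take p h n : valid p h -> valid p (take n h).
Proof.
move=> /allP vh; apply/allP => i; rewrite mem_iota size_take /= => hi.
have hin : (i < size h)%N by move: hi; case: (ltnP n (size h)) => ?; lia.
rewrite nth_take; last by move: hi; case: (ltnP n (size h)) => ?; lia.
by apply: vh; rewrite mem_iota.
Qed.

Lemma valid_par p h n : valid p h -> (0 < n <= size h)%N ->
  match par h n with inl k => (k <= n.-1 %/ p)%N | inr k => (0 < k < n)%N end.
Proof.
move=> /allP vh /andP[n0 nh].
have /vh : n.-1 \in iota 0 (size h) by rewrite mem_iota; lia.
rewrite mem_choices /par.
case: (nth r0 h n.-1) => // k; lia.
Qed.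

Lemma gh_valid p N h : h \in gport_hists p N -> size h = N /\ valid p h.
Proof.
elim: N h => [|N IH] h; first by rewrite inE => /eqP ->.
case/flatten_mapP => h0 /IH[s0 v0]; case/mapP => v vin ->.
by rewrite size_rcons s0 valid_rcons v0 s0.
Qed.

Lemma top_new p h v : valid p h -> v \in gport_choices p (size h) ->
  top (rcons h v) (size h).+1 = match v with inl 0 => Some (size h).+1 | inl _ => None | inr k => top h k end.
Proof.
move=> vh; rewrite mem_choices topE // par_new.
case: v => [[|k]|k] // /andP[k0 kn].
by rewrite k0 ltnS kn /= top_rcons.
Qed.

Lemma iota1S n : iota 1 n.+1 = rcons (iota 1 n) n.+1.
Proof. by rewrite -(addn1 n) iotaD /= cats1 add1n addn1. Qed.

Lemma count_rcons T (a : pred T) s x : count a (rcons s x) = (count a s + a x)%N.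
Proof. by rewrite -cats1 count_cat /= addn0. Qed.

Definition sz h u := count (fun n => top h n == Some u) (iota 1 (size h)).

Lemma sz_rcons h v u : sz (rcons h v) u = (sz h u + (top (rcons h v) (size h).+1 == Some u))%N.
Proof.
rewrite /sz size_rcons iota1S count_rcons; congr (_ + _)%N.
apply: eq_in_count => n; rewrite mem_iota => /andP[n0 nh].
by rewrite top_rcons //; lia.
Qed.

Lemma sz_new h : sz h (size h).+1 = 0%N.
Proof.
rewrite /sz; transitivity (count pred0 (iota 1 (size h))); last exact: count_pred0.
apply: eq_in_count => n; rewrite mem_iota => /andP[n0 nh] /=.
apply/negP => /eqP /(top_some n0) /andP[/andP[_ un] _]; lia.
Qed.

Definition Bt h m := count (fun u => (par h u == r0) && (sz h u == m)) (iota 1 (size h)).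

Lemma in_sub_top p h u : valid p h -> (0 < u)%N -> par h u = r0 ->
  forall f n, (0 < n)%N -> (n <= f)%N -> (n <= size h)%N -> in_subtree h f n u = (top h n == Some u).
Proof.
move=> vh u0 pu; elim=> [|f IH] n n0 nf nh; first lia.
rewrite /=; have [->|nu] := eqVneq n u; first by rewrite top_self // eqxx.
rewrite /= topE //; have := valid_par vh (n := n) ltac:(lia) ; rewrite /par.
case: (nth r0 h n.-1) => [[|k]|k] /=.
- by move=> _; case: eqP => // [[e]]; rewrite e eqxx in nu.
- by move=> _; case: eqP.
- move=> kk; rewrite kk; case/andP: kk => k0 kn; apply: IH => //; lia.
Qed.

Lemma B_Bt p h m : valid p h -> gport_B h m = Bt h m.
Proof.
move=> vh; apply: eq_in_count => u; rewrite mem_iota => /andP[u0 uh] /=.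
have -> : nth r0 h u.-1 = par h u by [].
case e: (par h u == r0) => //=; congr (_ == _).
apply: eq_in_count => n; rewrite mem_iota => /andP[n0 nh].
apply: (in_sub_top vh) => //; by [apply/eqP | lia].
Qed.

Lemma eqSome (T : eqType) (a b : T) : (Some a == Some b) = (a == b).
Proof. by []. Qed.

Definition kcl h (v : vertex) : option nat := match v with
  | inl 0 => Some 0%N | inl _ => None
  | inr n => if top h n is Some u then Some (sz h u) else None end.

Lemma count_swap (T : eqType) (P Q : pred T) (l : seq T) (u0 : T) : uniq l -> u0 \in l ->
  (forall x, x != u0 -> P x = Q x) -> (count P l + Q u0 = count Q l + P u0)%N.
Proof.
elim: l => // x l IH /= /andP[xl ul]; rewrite inE => hu hPQ.
have [e|ne] := eqVneq x u0.
  subst x; have -> : count P l = count Q l.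
    by apply: eq_in_count => y yl; apply: hPQ; apply: contraNneq xl => <-.
  lia.
rewrite (hPQ _ ne); move: hu; rewrite eq_sym (negbTE ne) /= => hu.
have := IH ul hu hPQ; lia.
Qed.

Lemma Bt_rcons p h v m : valid p h -> v \in gport_choices p (size h) -> (0 < m)%N ->
  (Bt (rcons h v) m + (kcl h v == Some m) = Bt h m + (kcl h v == Some m.-1))%N.
Proof.
move=> vh vin m0.
rewrite /Bt size_rcons iota1S count_rcons par_new sz_rcons sz_new add0n.
have E : {in iota 1 (size h), (fun u => (par (rcons h v) u == r0) && (sz (rcons h v) u == m)) =1
   (fun u => (par h u == r0) && (sz h u + (top (rcons h v) (size h).+1 == Some u) == m)%N)}.
  move=> u; rewrite mem_iota => /andP[u0 uh].
  by rewrite /= par_rcons ?sz_rcons //; lia.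
rewrite (eq_in_count E) (top_new vh vin); clear E.
set Q := (fun u => (par h u == r0) && (sz h u == m)).
case: v vin => [[|k]|n] vin /=.
- rewrite (@eq_in_count _ _ Q); last first.
    move=> u; rewrite mem_iota => /andP[u0 uh] /=.
    by rewrite (_ : (Some (size h).+1 == Some u) = false) ?addn0 //; apply/eqP => -[]; lia.
  rewrite eqxx /=.
  move: (count Q _) => c; clear Q; case: m m0 => [|[|m]] //= _; lia.
- rewrite (@eq_in_count _ _ Q) ?addn0 //.
  by move=> u _ /=; rewrite addn0.
- move: vin; rewrite mem_choices => /andP[n0 nh].
  case et: (top h n) => [u0|] /=; last first.
    rewrite (@eq_in_count _ _ Q) ?addn0 //.
    by move=> u _ /=; rewrite addn0.
  have /andP[/andP[u00 u0n] pu0] := top_some n0 et.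
  have := @count_swap _ (fun u => (par h u == r0) && (sz h u + (Some u0 == Some u) == m)%N)
    Q (iota 1 (size h)) u0 (iota_uniq _ _).
  rewrite mem_iota /Q /= pu0 /= eqxx /=.
  rewrite !eqSome.
  have -> : (sz h u0 == m.-1) = (sz h u0 + 1 == m)%N by apply/eqP/eqP; lia.
  move=> H; rewrite addn0 H //; first lia.
  by move=> x hx; rewrite ?eqSome (eq_sym u0) (negbTE hx) addn0.
Qed.

Lemma notin_h p h n : valid p h -> (size h < n)%N -> inr n \notin h.
Proof.
elim/last_ind: h => [|h v IH] //; rewrite valid_rcons size_rcons => /andP[vh vin] hn.
rewrite mem_rcons inE negb_or IH ?andbT //; last lia.
move: vin; rewrite mem_choices; case: v => // k hk; apply/eqP => -[]; lia.
Qed.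

Lemma outdeg_rcons h v w : outdeg (rcons h v) w = (outdeg h w + (v == w))%N.
Proof. by rewrite /outdeg count_rcons /= eq_sym. Qed.

Lemma outdeg_new p h n : valid p h -> (size h < n)%N -> outdeg h (inr n) = 0%N.
Proof. by move=> vh hn; apply/count_memPn; apply: notin_h vh hn. Qed.

Section Weights.
Variables (R : realType) (alpha ell : R) (p : nat).
Local Open Scope ring_scope.

Lemma sum_eq_seq (R' : nmodType) (T : eqType) (l : seq T) (k : T) (F : T -> R') : uniq l ->
  \sum_(n <- l) (if n == k then F n else 0) = if k \in l then F k else 0.
Proof.
elim: l => [|x l IH]; first by rewrite big_nil.
rewrite /= big_cons inE => /andP[xl ul]; rewrite IH //.
have [e|ne] := eqVneq x k; first by subst x; rewrite (negbTE xl) addr0.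
by rewrite add0r.
Qed.


Definition wt h (v : vertex) : R := (outdeg h v)%:R + (if v is inl _ then ell else alpha).

Lemma trans_wt h v : gport_trans alpha ell p h v = wt h v / gport_C alpha ell p (size h).
Proof. by case: v. Qed.

Definition Wsub h u : R := \sum_(n <- iota 1 (size h))
  (if top h n == Some u then (outdeg h (inr n))%:R + alpha else 0).

Lemma W_inv h u : valid p h -> (0 < u <= size h)%N -> par h u = r0 ->
  Wsub h u = (sz h u)%:R * (alpha + 1) - 1.
Proof.
elim/last_ind: h u => [|h v IH] u; first by move=> _ /= /andP[? ?]; lia.
rewrite valid_rcons size_rcons => /andP[vh vin] /andP[u0 uh] pu.
rewrite /Wsub size_rcons iota1S big_rcons sz_rcons (top_new vh vin) outdeg_rcons.
rewrite (outdeg_new vh (n := (size h).+1)) // add0n.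
have -> : (v == inr (size h).+1) = false.
  by move: vin; rewrite mem_choices; case: (v) => // k hk; apply/eqP => -[]; lia.
have E : \sum_(n <- iota 1 (size h)) (if top (rcons h v) n == Some u then
            (outdeg (rcons h v) (inr n))%:R + alpha else 0)
   = \sum_(n <- iota 1 (size h)) (if top h n == Some u then (outdeg h (inr n))%:R + alpha else 0)
     + \sum_(n <- iota 1 (size h)) (if n == (if v is inr k then k else 0%N) then
            (if top h n == Some u then 1 else 0) else 0).
  rewrite -big_split /=; apply: eq_big_seq => n; rewrite mem_iota => /andP[n0 nh].
  rewrite top_rcons // outdeg_rcons natrD.
  clear pu vin IH; case: v => [k|k] /=.
    by rewrite (gtn_eqF n0) !addr0.
  rewrite (inj_eq (@inr_inj nat nat)) (eq_sym k); have [e|ne] := eqVneq n k; last by rewrite !addr0.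
  case: ifP => _; last by rewrite addr0.
  by rewrite addrAC.
rewrite E {E}.
have [eu|neu] := eqVneq u (size h).+1.
  subst u; move: pu; rewrite par_new => pv; subst v.
  rewrite sz_new /= eqxx.
  rewrite big1_seq; last first.
    move=> n /andP[_]; rewrite mem_iota => /andP[n0 nh].
    case: ifP => // /eqP /(top_some n0) /andP[/andP[_ ?] _]; lia.
  rewrite big1_seq; last first.
    by move=> n /andP[_]; rewrite mem_iota => /andP[n0 _]; rewrite (gtn_eqF n0).
  by rewrite !add0r add0n mul1r addrK.
have uh' : (u <= size h)%N by lia.
rewrite par_rcons // in pu.
rewrite -/(Wsub h u) IH //; last by rewrite u0.
rewrite sum_eq_seq ?iota_uniq // mem_iota.
case: v vin => [[|k]|k] vin /=.
- rewrite eqSome eq_sym (negbTE neu) /= addn0; ring.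
- rewrite addn0; ring.
- move: vin; rewrite mem_choices => kin.
  rewrite (_ : (1 <= k < 1 + size h)%N); last lia.
  case: (top h k == Some u) => /=; ring.
Qed.
End Weights.

Lemma uniq_choices p N : uniq (gport_choices p N).
Proof.
rewrite /gport_choices cons_uniq mem_cat negb_or cat_uniq.
rewrite (map_inj_uniq inl_inj) (map_inj_uniq (@inr_inj nat nat)) !iota_uniq /=.
apply/and3P; split.
- apply/andP; split; apply/mapP => -[k]; rewrite ?mem_iota // => k1 [e]; lia.
- by apply/hasPn => x /mapP[k _ ->]; apply/mapP => -[].
- by [].
Qed.

Lemma choices_mono p N M : (N <= M)%N -> {subset gport_choices p N <= gport_choices p M}.
Proof.
move=> NM v; rewrite !mem_choices; case: v => k.
  by move=> hk; apply: (leq_trans hk); apply: leq_div2r.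
lia.
Qed.

Lemma valid_all p h N : valid p h -> (size h <= N)%N -> all (mem (gport_choices p N)) h.
Proof.
elim/last_ind: h => [|h v IH] //; rewrite valid_rcons size_rcons => /andP[vh vin] hN.
rewrite all_rcons /= (choices_mono _ vin) ?IH //; lia.
Qed.

Definition col (j : nat) h v : nat := if kcl h v is Some s then (if (s <= j)%N then s else j.+1) else j.+1.

Lemma col_lt j h v : (col j h v < j.+2)%N.
Proof. rewrite /col; case: (kcl h v) => // s; case: ifP => //; lia. Qed.

Lemma sz_pos h n u : (0 < n <= size h)%N -> top h n = Some u -> (0 < sz h u)%N.
Proof.
move=> /andP[n0 nh] /[dup] et /(top_some n0) /andP[/andP[u0 un] pu].
rewrite /sz -has_count; apply/hasP; exists u; last by rewrite top_self //; apply/eqP.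
rewrite mem_iota; lia.
Qed.

Lemma col0 j h v : (0 < j)%N -> (forall n, v = inr n -> 0 < n <= size h)%N -> (col j h v == 0%N) = (v == r0).
Proof.
move=> j0 hv; rewrite /col /kcl; case: v hv => [[|k]|n] hv //=.
case et: (top h n) => [u|] //.
have := sz_pos (hv n erefl) et; case: ifP => _ ? ; apply/negbTE; lia.
Qed.

Lemma neqF (a b : nat) : a <> b -> (a == b) = false.
Proof. by move/eqP/negbTE. Qed.

Section Weights2.
Variables (R : realType) (alpha ell : R) (p : nat).
Local Open Scope ring_scope.

Lemma sum_constP (T : Type) (l : seq T) (P : pred T) (c : R) :
  \sum_(i <- l | P i) c = (count P l)%:R * c.
Proof.
elim: l => [|x l IH]; first by rewrite big_nil mul0r.
rewrite big_cons IH /=; case: (P x); rewrite /= ?add0n // natrD; ring.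
Qed.

Lemma sum_const0 (T : Type) (l : seq T) (c : R) : \sum_(i <- l) c = (size l)%:R * c.
Proof. by rewrite sum_constP count_predT. Qed.

Lemma sum_outdeg (s : seq vertex) h : uniq s -> all (mem s) h ->
  \sum_(v <- s) ((outdeg h v)%:R : R) = (size h)%:R.
Proof.
move=> us; elim/last_ind: h => [|h x IH].
  by move=> _; rewrite big1 // => v _; rewrite /outdeg.
rewrite all_rcons => /andP[xs hs].
under eq_bigr => v _ do rewrite outdeg_rcons natrD.
rewrite big_split /= IH // size_rcons.
have -> : \sum_(v <- s) (((x == v) : nat)%:R : R) = \sum_(v <- s) (if v == x then 1 else 0).
  by apply: eq_bigr => v _; rewrite eq_sym; case: (v == x).
by rewrite sum_eq_seq // (_ : x \in s) // -addn1 natrD.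
Qed.

Lemma sum_wt h : valid p h ->
  \sum_(v <- gport_choices p (size h)) wt alpha ell h v = gport_C alpha ell p (size h).
Proof.
move=> vh; rewrite /wt big_split /= sum_outdeg ?uniq_choices ?valid_all //.
rewrite /gport_choices big_cons big_cat !big_map /= !sum_const0 !size_iota /gport_C.
ring.
Qed.

Lemma sum_col0 j h : (0 < j)%N -> valid p h ->
  \sum_(v <- gport_choices p (size h) | col j h v == 0%N) wt alpha ell h v = wt alpha ell h r0.
Proof.
move=> j0 vh.
rewrite big_mkcond (eq_big_seq (fun v => if v == r0 then wt alpha ell h v else 0)) => [|v]; last first.
  rewrite mem_choices => vin; rewrite col0 // => n e; subst v; exact: vin.
by rewrite sum_eq_seq ?uniq_choices // mem_choices.
Qed.

Lemma sum_colm j h m : valid p h -> (0 < m <= j)%N ->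
  \sum_(v <- gport_choices p (size h) | col j h v == m) wt alpha ell h v
  = (Bt h m)%:R * (m%:R * (alpha + 1) - 1).
Proof.
move=> vh /andP[m0 mj].
set Q := fun u => (par h u == r0) && (sz h u == m).
rewrite /Bt -/Q -sum_constP [RHS]big_mkcond.
rewrite [RHS](eq_big_seq (fun u => if Q u then Wsub alpha h u else 0)); last first.
  move=> u; rewrite mem_iota => /andP[u0 uh]; case qu: (Q u) => //.
  case/andP: qu => /eqP pu /eqP su.
  by rewrite (@W_inv _ alpha p h u vh) ?su // u0; lia.
rewrite -[RHS]big_mkcond.
rewrite /Wsub exchange_big /=.
rewrite /gport_choices big_cons /= {1}/col /=.
rewrite neqF; last lia.
rewrite big_cat /= !big_map /=.
rewrite big1_seq ?add0r; last first.
  move=> k /andP[hk]; rewrite mem_iota; case: k hk => // k hk _.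
  by move: hk; rewrite /col /= => /eqP; lia.
rewrite big_mkcond; apply: eq_big_seq => n; rewrite mem_iota => /andP[n0 nh].
rewrite /col /=.
case et: (top h n) => [u0|]; last first.
  rewrite big1; last by move=> u _; case: (Q u).
  rewrite neqF //; lia.
have /andP[/andP[u00 u0n] pu0] := top_some n0 et.
rewrite big_mkcond /=.
rewrite (eq_bigr (fun u => if u == u0 then (if Q u then (outdeg h (inr n))%:R + alpha else 0) else 0)); last first.
  move=> u _; rewrite eqSome (eq_sym u0).
  by case: (u == u0); case: (Q u).
rewrite sum_eq_seq ?iota_uniq // mem_iota (_ : (1 <= u0 < 1 + size h)%N); last lia.
rewrite /Q pu0 /=.
have [e|ne] := eqVneq (sz h u0) m; first by rewrite e mj eqxx.
case: leqP => _; first by rewrite (negbTE ne).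
rewrite neqF //; lia.
Qed.
End Weights2.

Section UrnLemmas.
Variables (R : realType) (alpha ell : R) (p j : nat).
Local Open Scope ring_scope.

Notation Z := (urn_state alpha ell p j).

Lemma urn_state_ext (u u' : seq nat) n : (forall i, (i < n)%N -> nth 0%N u i = nth 0%N u' i) ->
  Z u n = Z u' n.
Proof.
elim: n => [|n IH] H //=.
rewrite H // IH // => i hi; apply: H; lia.
Qed.

Lemma urn_state_rcons (u : seq nat) c n : (n <= size u)%N -> Z (rcons u c) n = Z u n.
Proof. move=> hn; apply: urn_state_ext => i hi; rewrite nth_rcons; case: ifP => //; lia. Qed.

Lemma urn_state_new (u : seq nat) c :
  Z (rcons u c) (size u).+1 = urn_step alpha ell p j (size u) c (Z u (size u)).
Proof. by rewrite /= urn_state_rcons // nth_rcons ltnn eqxx. Qed.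

Lemma sum_ordI n a (x : R) : \sum_(i < n) (if (i : nat) == a then x else 0) = if (a < n)%N then x else 0.
Proof.
rewrite -(big_mkord xpredT (fun i => if i == a then x else 0)) /index_iota subn0.
by rewrite sum_eq_seq ?iota_uniq // mem_iota.
Qed.

Lemma step_0 N c (Zf : nat -> R) :
  urn_step alpha ell p j N c Zf 0 = Zf 0%N + ((c == 0%N) : nat)%:R.
Proof.
rewrite /urn_step /= andbF addr0; case: c => [|c] //=.
by case: ifP => _; rewrite addr0.
Qed.

Definition w (m : nat) : R := m%:R * (alpha + 1) - 1.

Lemma step_m N c (Zf : nat -> R) m : (c <= j.+1)%N -> (0 < m <= j)%N ->
  urn_step alpha ell p j N c Zf m = Zf m + (((c.+1 == m) : nat)%:R - ((c == m) : nat)%:R) * w m.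
Proof.
move=> cj /andP[m0 mj]; rewrite /urn_step /w.
rewrite (neqF (a := m) (b := j.+1)) ?andbF ?addr0; last lia.
rewrite (neqF (a := m) (b := 0%N)); last lia.
case: c cj => [|c] cj.
  rewrite (neqF (a := 0%N) (b := m)) /=; last lia.
  case: (m =P 1%N) => [->|m1] /=; first by ring.
  rewrite (neqF (a := 1%N) (b := m)) /=; [ring | lia].
case: (leqP c.+1 j) => cj'.
  case: (m =P c.+1) => [->|mc] /=.
    rewrite eqxx (neqF (a := c.+2) (b := c.+1)) /=; [ring | lia].
  case: (m =P c.+2) => [->|mc1] /=.
    rewrite eqxx (neqF (a := c.+1) (b := c.+2)) /=; [ring | lia].
  rewrite ?(neqF (a := c.+1) (b := m)) ?(neqF (a := c.+2) (b := m)) ?(neqF (a := m) (b := c.+2)) /=; try lia; ring.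
rewrite ?(neqF (a := c.+1) (b := m)) ?(neqF (a := c.+2) (b := m)) /=; try lia; ring.
Qed.

Lemma ifs_split (b1 b2 : bool) (x y : R) : (b1 -> b2 = false) ->
  (if b1 then x else if b2 then y else 0) = (if b1 then x else 0) + (if b2 then y else 0).
Proof.
case: b1; case: b2 => H /=; rewrite ?addr0 ?add0r //.
by have := H isT.
Qed.

Lemma sum_step N c (Zf : nat -> R) : (c <= j.+1)%N ->
  \sum_(i < j.+2) urn_step alpha ell p j N c Zf i
  = \sum_(i < j.+2) Zf i + (1 + alpha) + (if (p %| N.+1)%N then ell else 0).
Proof.
move=> cj; rewrite /urn_step !big_split /=; congr (_ + _ + _).
  case: c cj => [|c] cj /=.
    rewrite (eq_bigr (fun i : 'I_j.+2 => (if (i : nat) == 0%N then 1 else 0) + (if (i : nat) == 1%N then alpha else 0))); last first.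
      by move=> i _; apply: ifs_split => /eqP ->.
    by rewrite big_split /= !sum_ordI.
  case: (leqP c.+1 j) => cj'.
    rewrite (eq_bigr (fun i : 'I_j.+2 => (if (i : nat) == c.+1 then - (c.+1%:R * (alpha + 1) - 1) else 0)
             + (if (i : nat) == c.+2 then c.+2%:R * (alpha + 1) - 1 else 0))); last first.
      by move=> i _; apply: ifs_split => /eqP ->; apply: neqF; lia.
    rewrite big_split /= !sum_ordI.
    rewrite ifT; last lia.
    rewrite ifT; last lia.
    rewrite -[c.+2%:R]natr1 -[c.+1%:R]natr1 /=; ring.
  by rewrite sum_ordI ltnSn.
case: (p %| N.+1)%N => /=; last by rewrite big1.
by rewrite sum_ordI ltnSn.
Qed.
End UrnLemmas.

Definition phi j h : seq nat := [seq col j (take i h) (nth r0 h i) | i <- iota 0 (size h)].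

Lemma size_phi j h : size (phi j h) = size h.
Proof. by rewrite /phi size_map size_iota. Qed.

Lemma iota0S n : iota 0 n.+1 = rcons (iota 0 n) n.
Proof. by rewrite -(addn1 n) iotaD /= cats1. Qed.

Lemma phi_rcons j h v : phi j (rcons h v) = rcons (phi j h) (col j h v).
Proof.
rewrite /phi size_rcons iota0S map_rcons; congr rcons.
  apply/eq_in_map => i; rewrite mem_iota /= => hi.
  by rewrite -cats1 takel_cat ?nth_cat ?hi //; apply: ltnW.
by rewrite -cats1 takel_cat // take_size nth_cat ltnn subnn.
Qed.

Lemma kcl_col j h v m : (0 < m <= j)%N ->
  ((kcl h v == Some m) = (col j h v == m)) /\ ((kcl h v == Some m.-1) = ((col j h v).+1 == m)).
Proof.
move=> /andP[m0 mj]; rewrite /col; case: (kcl h v) => [s|] /=.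
  rewrite !eqSome; case: leqP => sj; split; apply/eqP/eqP; lia.
by split; symmetry; apply: neqF; lia.
Qed.

Section Inv.
Variables (R : realType) (alpha ell : R) (p j : nat).
Local Open Scope ring_scope.
Notation Z := (urn_state alpha ell p j).

Lemma urn_inv h : (0 < j)%N -> (0 < p)%N -> valid p h ->
  [/\ Z (phi j h) (size h) 0%N = wt alpha ell h r0,
      (forall m, (0 < m <= j)%N -> Z (phi j h) (size h) m = (Bt h m)%:R * w alpha m)
    & \sum_(i < j.+2) Z (phi j h) (size h) i = gport_C alpha ell p (size h)].
Proof.
move=> j0 p0; elim/last_ind: h => [|h v IH].
  move=> _; rewrite /= /urn_init /wt /outdeg /=; split.
  - by rewrite add0r.
  - by move=> m /andP[m0 _]; rewrite (neqF (a := m) (b := 0%N)) /Bt /= ?mul0r //; lia.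
  - rewrite (eq_bigr (fun i : 'I_j.+2 => if (i : nat) == 0%N then ell else 0)) //.
    by rewrite sum_ordI /gport_C div0n /=; ring.
rewrite valid_rcons => /andP[vh vin].
have [I0 Im Is] := IH vh.
have cl := col_lt j h v.
rewrite size_rcons phi_rcons -(size_phi j h) urn_state_new size_phi.
set c := col j h v.
split.
- rewrite step_0 I0 /wt outdeg_rcons natrD.
  rewrite /c col0 //; first by rewrite addrAC.
  by move=> n e; move: vin; rewrite e mem_choices.
- move=> m hm; rewrite step_m // Im //.
  have [k1 k2] := kcl_col h v hm.
  have E := Bt_rcons vh vin (m := m) ltac:(case/andP: hm => //).
  rewrite k1 k2 -/c in E.
  have E2 : ((Bt (rcons h v) m)%:R : R) = (Bt h m)%:R + ((c.+1 == m) : nat)%:R - ((c == m) : nat)%:R.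
    by rewrite -natrD -E natrD addrK.
  rewrite E2; ring.
- rewrite sum_step // Is /gport_C divnS // natrD -addn1 natrD.
  by case: (p %| size h + 1)%N => /=; ring.
Qed.
End Inv.

Section Colour.
Variables (R : realType) (alpha ell : R) (p j : nat).
Local Open Scope ring_scope.
Notation Z := (urn_state alpha ell p j).

Lemma partition_col (s : seq vertex) (h : seq vertex) (X : vertex -> R) :
  \sum_(v <- s) X v = \sum_(c <- iota 0 j.+2) \sum_(v <- s | col j h v == c) X v.
Proof.
under [RHS]eq_bigr => c _ do rewrite big_mkcond.
rewrite exchange_big; apply: eq_bigr => v _.
under eq_bigr => c _ do rewrite eq_sym.
by rewrite sum_eq_seq ?iota_uniq // mem_iota col_lt.
Qed.

Lemma ord_iota n (F : nat -> R) : \sum_(i < n) F i = \sum_(i <- iota 0 n) F i.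
Proof. have -> : iota 0 n = index_iota 0 n by rewrite /index_iota subn0. by rewrite big_mkord. Qed.

Lemma colour_sum h c : (0 < j)%N -> (0 < p)%N -> valid p h -> (c < j.+2)%N ->
  \sum_(v <- gport_choices p (size h) | col j h v == c) wt alpha ell h v = Z (phi j h) (size h) c.
Proof.
move=> j0 p0 vh cj.
have [I0 Im Is] := urn_inv alpha ell j0 p0 vh.
have low : forall c, (c < j.+1)%N ->
    \sum_(v <- gport_choices p (size h) | col j h v == c) wt alpha ell h v = Z (phi j h) (size h) c.
  move=> c' hc'; case: c' hc' => [|c'] hc'; first by rewrite sum_col0 ?I0.
  by rewrite sum_colm ?Im //; lia.
have [cl|] := ltnP c j.+1; first exact: low.
move=> cge; have -> : c = j.+1 by lia.
have T := sum_wt alpha ell vh.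
rewrite (partition_col _ h) -Is ord_iota iota0S !big_rcons in T.
rewrite (eq_big_seq (fun c => Z (phi j h) (size h) c)) in T; last first.
  by move=> c'; rewrite mem_iota => /andP[_ hc']; apply: low.
by move/addrI: T.
Qed.
End Colour.

Section Main.
Variables (R : realType) (alpha ell : R) (p j : nat).
Local Open Scope ring_scope.
Notation Z := (urn_state alpha ell p j).

Lemma gw_rcons h v : gport_weight alpha ell p (rcons h v) =
  gport_weight alpha ell p h * gport_trans alpha ell p h v.
Proof.
rewrite /gport_weight size_rcons big_ord_recr /=; congr (_ * _).
  apply: eq_bigr => i _ /=.
  by rewrite -cats1 takel_cat ?nth_cat ?ltn_ord //; apply: ltnW.
by rewrite -cats1 takel_cat // take_size nth_cat ltnn subnn.
Qed.

Lemma uw_rcons u c : urn_weight alpha ell p j (rcons u c) =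
  urn_weight alpha ell p j u * (Z u (size u) c / \sum_(i < j.+2) Z u (size u) i).
Proof.
rewrite /urn_weight size_rcons big_ord_recr /=; congr (_ * _).
  apply: eq_bigr => i _ /=.
  rewrite urn_state_rcons; last exact: ltnW.
  by rewrite nth_rcons ltn_ord.
by rewrite urn_state_rcons // nth_rcons ltnn eqxx.
Qed.

Definition Hf (F : seq nat -> R) (u : seq nat) : R :=
  \sum_(c <- iota 0 j.+2) (Z u (size u) c / \sum_(i < j.+2) Z u (size u) i) * F (rcons u c).

Lemma main_gen N : (0 < j)%N -> (0 < p)%N -> forall F : seq nat -> R,
  \sum_(h <- gport_hists p N) gport_weight alpha ell p h * F (phi j h)
  = \sum_(u <- urn_hists j N) urn_weight alpha ell p j u * F u.
Proof.
move=> j0 p0; elim: N => [|N IH] F.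
  by rewrite /= !big_cons !big_nil /gport_weight /urn_weight !big_ord0.
have -> : gport_hists p N.+1 = flatten [seq [seq rcons h v | v <- gport_choices p N] | h <- gport_hists p N] by [].
have -> : urn_hists j N.+1 = flatten [seq [seq rcons h c | c <- iota 0 j.+2] | h <- urn_hists j N] by [].
rewrite !big_flatten !big_map.
rewrite (eq_big_seq (fun h => gport_weight alpha ell p h * Hf F (phi j h))); last first.
  move=> h /gh_valid [sh vh]; rewrite big_map.
  under eq_bigr => v _ do rewrite gw_rcons phi_rcons -mulrA.
  rewrite -big_distrr /=; congr (_ * _).
  rewrite (partition_col j _ h) /Hf size_phi; apply: eq_big_seq => c; rewrite mem_iota => /andP[_ cj].
  under eq_bigr => v /eqP -> do rewrite trans_wt.
  rewrite -big_distrl /= -big_distrl /= -sh colour_sum //.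
  by have [_ _ <-] := urn_inv alpha ell j0 p0 vh.
rewrite IH; apply: eq_bigr => u _; rewrite big_map /Hf big_distrr /=.
by apply: eq_bigr => c _; rewrite uw_rcons mulrA.
Qed.
End Main.

Lemma nth_phi j h i : (i < size h)%N -> nth 0%N (phi j h) i = col j (take i h) (nth r0 h i).
Proof. by move=> hi; rewrite /phi (nth_map 0%N) ?size_iota // nth_iota. Qed.

Lemma traj_eq (R : realType) (alpha ell : R) p j h : (0 < j)%N -> (0 < p)%N -> (0 < alpha)%R -> valid p h ->
  gport_traj R j h = urn_traj alpha ell p j (phi j h).
Proof.
move=> j0 p0 a0 vh.
rewrite /gport_traj /urn_traj size_phi; apply/eq_in_map => n; rewrite mem_iota => /andP[_ hn].
apply/eq_in_map => m; rewrite mem_iota => /andP[m0 mj].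
have vt := valid_take n vh.
have st : size (take n h) = n by apply: size_takel; lia.
have E : urn_state alpha ell p j (phi j h) n = urn_state alpha ell p j (phi j (take n h)) n.
  apply: urn_state_ext => i hi.
  rewrite nth_phi; last lia.
  rewrite nth_phi; last by rewrite st.
  by rewrite take_takel ?nth_take //; lia.
have [_ Im _] := urn_inv alpha ell j0 p0 vt; rewrite st in Im.
rewrite E Im; last lia.
rewrite /w mulfK; first by rewrite (B_Bt m vt).
have hm : (1 <= (m%:R : R))%R by rewrite ler1n.
apply/eqP => H2; nra.
Qed.

Unset Implicit Arguments.
Local Open Scope ring_scope.

Theorem mainTheorem12 (R : realType) (j p : nat) (alpha ell : R)
  (hj : (1 <= j)%N) (halpha : 0 < alpha) (hell : 0 < ell) (hp : (0 < p)%N) :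
  forall (N : nat) (t : seq (seq R)),
    \sum_(h <- gport_hists p N | gport_traj R j h == t) gport_weight alpha ell p h
    = \sum_(h <- urn_hists j N | urn_traj alpha ell p j h == t)
        urn_weight alpha ell p j h.
Proof.
move=> N t.
have key := main_gen alpha ell N hj hp (fun u => if urn_traj alpha ell p j u == t then 1 else 0).
rewrite big_mkcond [RHS]big_mkcond.
transitivity (\sum_(h <- gport_hists p N) gport_weight alpha ell p h *
   (if urn_traj alpha ell p j (phi j h) == t then 1 else 0)).
  apply: eq_big_seq => h /gh_valid [_ vh]; rewrite (traj_eq ell hj hp halpha vh).
  by case: ifP => _; rewrite ?mulr1 ?mulr0.
rewrite key; apply: eq_bigr => u _.
by case: ifP => _; rewrite ?mulr1 ?mulr0.
Qed.
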